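(* Let $\mathbf r=\binom{r_1}{r_2}\in\mathbb Q^2$ and let $a,b,d\in\mathbb Z$ with $0\le b<a$ and $d\ge1$. Then for $\tau\in\mathbb H$, $$\varpi_{\mathbf r}\Big(\frac{a\tau+b}{d}\Big)=\prod_{j=0}^{a-1}\prod_{\ell=0}^{d-1}\varpi_{M^{-1}\binom{j+r_1}{\ell+r_2}}(\tau),\qquad M=\begin{pmatrix}a&b\\0&d\end{pmatrix}.$$
   Context: $e(z)=e^{2\pi iz}$; $\mathbb H$ the upper half plane; $\varpi(z,\tau)=\prod_{k\ge0}(1-e(z+k\tau))$, and for $\mathbf s=\binom{s_1}{s_2}\in\mathbb R^2$, $\varpi_{\mathbf s}(\tau)=\varpi(s_2\tau-s_1,\tau)$. *)

(* Defs.v *)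
From Stdlib Require Import Reals QArith ZArith ClassicalEpsilon.
From Coquelicot Require Import Coquelicot.
Open Scope R_scope.

(* e(z) = exp(2 pi i z), written out for z = x + i y:
   e(z) = exp(-2 pi y) (cos (2 pi x) + i sin (2 pi x)). *)
Definition ee (z : C) : C :=
  Cmult (RtoC (exp (- (2 * PI * Im z))))
        (cos (2 * PI * Re z), sin (2 * PI * Re z)).

Fixpoint prodC (n : nat) (f : nat -> C) : C :=
  match n with
  | O => RtoC 1
  | S m => Cmult (prodC m f) (f m)
  end.

(* value of the infinite product prod_{k >= 0} f k, i.e. the limit of the
   partial products (chosen by classical choice; limits in C are unique). *)
Definition infprodC (f : nat -> C) : C :=
  epsilon (inhabits (RtoC 0))
    (fun L => filterlim (fun n => prodC n f) eventually (locally L)).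

Definition varpi (z tau : C) : C :=
  infprodC (fun k => Cminus (RtoC 1) (ee (Cplus z (Cmult (RtoC (INR k)) tau)))).

Definition varpi_s (s1 s2 : R) (tau : C) : C :=
  varpi (Cminus (Cmult (RtoC s2) tau) (RtoC s1)) tau.

Definition in_H (tau : C) : Prop := 0 < Im tau.

(* M = [[a, b], [0, d]];  M^{-1} = (1/(a d)) [[d, -b], [0, a]].
   Components of M^{-1} (v1, v2)^T. *)
Definition Minv1 (a b d v1 v2 : R) : R := (d * v1 - b * v2) / (a * d).
Definition Minv2 (a b d v1 v2 : R) : R := (a * v2) / (a * d).

(* Main.v *)
Require Import Defs.
From Stdlib Require Import Reals QArith ZArith.
From Coquelicot Require Import Coquelicot.
From mathcomp Require all_boot all_algebra complex Rstruct.
Module MC.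
Import all_boot all_algebra complex Rstruct.
Import GRing.Theory.
Local Open Scope ring_scope.

Lemma prim_prod (F : fieldType) (n : nat) (z x : F) :
  n.-primitive_root z -> \prod_(j < n) (1 - x * z ^+ j) = 1 - x ^+ n.
Proof.
move=> pz.
have n0 : (0 < n)%N by apply: prim_order_gt0 pz.
have [->|x0] := eqVneq x 0.
  rewrite big1 ?expr0n; last by move=> j _; rewrite mul0r subr0.
  by rewrite eqn0Ngt n0 subr0.
have E : \prod_(j < n) (1 - x * z ^+ j) = x ^+ n * \prod_(j < n) (x^-1 - z ^+ j).
  have -> : x ^+ n = \prod_(j < n) x by rewrite prodr_const card_ord.
  rewrite -big_split /=; apply: eq_bigr => j _.
  by rewrite mulrBr mulrV ?unitfE.
rewrite E.
have -> : \prod_(j < n) (x^-1 - z ^+ j) = ('X^n - 1).[x^-1].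
  rewrite -(factor_Xn_sub_1 pz) horner_prod big_mkord; apply: eq_bigr => j _.
  by rewrite hornerXsubC.
rewrite !hornerE mulrBr -exprMn mulrV ?unitfE // expr1n mulr1 //.
Qed.

Definition phi (z : C) : Rdefinitions.R[i] := Complex (fst z) (snd z).
Lemma phiM x y : phi (Cmult x y) = phi x * phi y.
Proof. by case: x => ? ?; case: y. Qed.
Lemma phiB x y : phi (Cminus x y) = phi x - phi y.
Proof. by case: x => ? ?; case: y. Qed.
Lemma phi1 : phi (RtoC 1) = 1.
Proof. by []. Qed.
Lemma phi_inj : injective phi.
Proof. by case=> [? ?] [? ?] [-> ->]. Qed.
Lemma phi_pow x k : phi (Cpow x k) = phi x ^+ k.
Proof. elim: k => [|k IH] /=; first by []. by rewrite phiM IH exprS. Qed.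
Lemma phi_prodC n f : phi (prodC n f) = \prod_(j < n) phi (f j).
Proof. elim: n => [|n IH] /=; first by rewrite big_ord0.
by rewrite phiM IH big_ord_recr. Qed.

Lemma C_root_prod (n : nat) (z X : C) : (0 < n)%N -> Cpow z n = RtoC 1 ->
  (forall k, (0 < k)%N -> (k < n)%N -> Cpow z k <> RtoC 1) ->
  prodC n (fun j => Cminus (RtoC 1) (Cmult X (Cpow z j))) = Cminus (RtoC 1) (Cpow X n).
Proof.
move=> n0 zn zk; apply: phi_inj.
rewrite phi_prodC phiB phi_pow phi1.
under eq_bigr do rewrite phiB phiM phi_pow phi1.
apply: prim_prod.
rewrite /primitive_root_of_unity n0 /=; apply/forallP => i.
rewrite unity_rootE; apply/eqP; case: (boolP (i.+1 == n)) => [/eqP e|ne].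
  by rewrite -phi_pow e zn phi1 eqxx.
apply/negP => /eqP h; apply: (zk i.+1) => //.
  by rewrite ltn_neqAle ne ltn_ord.
by apply: phi_inj; rewrite phi_pow h phi1.
Qed.

Lemma C_root_prod' (n : nat) (z X : C) : (0 < n)%coq_nat -> Cpow z n = RtoC 1 ->
  (forall k, (0 < k)%coq_nat -> (k < n)%coq_nat -> Cpow z k <> RtoC 1) ->
  prodC n (fun j => Cminus (RtoC 1) (Cmult X (Cpow z j))) = Cminus (RtoC 1) (Cpow X n).
Proof.
move=> /ltP n0 zn zk; apply: C_root_prod => // k /ltP h1 /ltP h2; exact: zk.
Qed.
End MC.
From Stdlib Require Import Reals QArith ZArith ClassicalEpsilon Lra Lia.
From Coquelicot Require Import Coquelicot.
Open Scope R_scope.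

Lemma ee_ext u v : Re u = Re v -> Im u = Im v -> ee u = ee v.
Proof. intros H1 H2. unfold ee. rewrite H1, H2. reflexivity. Qed.

Lemma ee_add u v : ee (Cplus u v) = Cmult (ee u) (ee v).
Proof.
  destruct u as [u1 u2], v as [v1 v2]. unfold ee, Cmult, Cplus, Re, Im, RtoC; simpl.
  replace (- (2 * PI * (u2 + v2))) with (- (2 * PI * u2) + - (2 * PI * v2)) by ring.
  replace (2 * PI * (u1 + v1)) with (2 * PI * u1 + 2 * PI * v1) by ring.
  rewrite exp_plus, cos_plus, sin_plus.
  f_equal; ring.
Qed.

Lemma ee_pow u k : Cpow (ee u) k = ee (Cmult (RtoC (INR k)) u).
Proof.
  induction k as [|k IH].
  - simpl. unfold ee. destruct u as [u1 u2]. unfold Cmult, RtoC, Re, Im; simpl.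
    replace (- (2 * PI * (0 * u2 + 0 * u1))) with 0 by ring.
    replace (2 * PI * (0 * u1 - 0 * u2)) with 0 by ring.
    rewrite exp_0, cos_0, sin_0. unfold RtoC. f_equal; ring.
  - simpl Cpow. rewrite IH, <- ee_add. apply ee_ext; destruct u as [u1 u2];
    unfold Cmult, Cplus, RtoC, Re, Im; simpl; try rewrite S_INR; try (destruct k; simpl); ring.
Qed.

Lemma ee_nat k : ee (RtoC (INR k)) = RtoC 1.
Proof.
  unfold ee, RtoC, Re, Im; simpl.
  replace (- (2 * PI * 0)) with 0 by ring.
  replace (2 * PI * INR k) with (0 + 2 * INR k * PI) by ring.
  rewrite cos_period. 
  assert (sin (0 + 2 * INR k * PI) = 0).
  { rewrite Rplus_0_l. apply sin_eq_0_1. exists (2 * Z.of_nat k)%Z.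
    rewrite mult_IZR, <- INR_IZR_INZ. ring. }
  rewrite H, exp_0, cos_0. unfold Cmult; simpl. f_equal; ring.
Qed.

Lemma Cmod_ee u : Cmod (ee u) = exp (- (2 * PI * Im u)).
Proof.
  unfold ee. rewrite Cmod_mult, Cmod_R, Rabs_pos_eq by (left; apply exp_pos).
  unfold Cmod; simpl.
  replace (cos (2 * PI * Re u) * (cos (2 * PI * Re u) * 1) + sin (2 * PI * Re u) * (sin (2 * PI * Re u) * 1)) with 1.
  - rewrite sqrt_1. ring.
  - pose proof (sin2_cos2 (2 * PI * Re u)). unfold Rsqr in H. lra.
Qed.

Lemma exp_mult_nat k x : exp (INR k * x) = exp x ^ k.
Proof.
  induction k as [|k IH]. simpl. rewrite Rmult_0_l, exp_0. reflexivity.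
  rewrite S_INR. replace ((INR k + 1) * x) with (x + INR k * x) by ring.
  rewrite exp_plus, IH. simpl. ring.
Qed.

Lemma exp_le x y : x <= y -> exp x <= exp y.
Proof. intros [H|H]. left; apply exp_increasing; exact H. subst; lra. Qed.

Lemma partial_bound (z tau : C) (n : nat) :
  0 < Im tau ->
  Cmod (prodC n (fun k => Cminus (RtoC 1) (ee (Cplus z (Cmult (RtoC (INR k)) tau)))))
  <= exp (exp (- (2 * PI * Im z)) * (1 - exp (- (2 * PI * Im tau)) ^ n) / (1 - exp (- (2 * PI * Im tau)))).
Proof.
  intros Ht.
  set (A := exp (- (2 * PI * Im z))). set (q := exp (- (2 * PI * Im tau))).
  assert (Hq1 : q < 1). { unfold q. rewrite <- exp_0. apply exp_increasing.
    pose proof PI_RGT_0. nra. }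
  assert (Hq0 : 0 < q) by apply exp_pos.
  assert (HA : 0 < A) by apply exp_pos.
  induction n as [|n IH].
  - simpl. rewrite Cmod_1. replace (A * (1 - 1) / (1 - q)) with 0 by (field; lra).
    rewrite exp_0. lra.
  - simpl prodC. rewrite Cmod_mult.
    assert (Hu : Cmod (Cminus (RtoC 1) (ee (Cplus z (Cmult (RtoC (INR n)) tau)))) <= 1 + A * q ^ n).
    { unfold Cminus. eapply Rle_trans. apply Cmod_triangle. rewrite Cmod_opp, Cmod_1, Cmod_ee.
      apply Rplus_le_compat_l. right. unfold A, q. rewrite <- exp_mult_nat, <- exp_plus.
      f_equal. destruct z, tau. unfold Cplus, Cmult, RtoC, Im; simpl. ring. }
    eapply Rle_trans. apply Rmult_le_compat; try apply Cmod_ge_0. exact IH. exact Hu.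
    eapply Rle_trans. apply Rmult_le_compat_l. left; apply exp_pos. apply exp_ineq1_le.
    rewrite <- exp_plus. right. f_equal. simpl. field. lra.
Qed.

Lemma prod_conv (z tau : C) : 0 < Im tau ->
  exists L, filterlim (fun n => prodC n (fun k => Cminus (RtoC 1) (ee (Cplus z (Cmult (RtoC (INR k)) tau))))) eventually (locally L).
Proof.
  intros Ht.
  set (u := fun k : nat => Cminus (RtoC 1) (ee (Cplus z (Cmult (RtoC (INR k)) tau)))).
  set (p := fun n => prodC n u).
  set (A := exp (- (2 * PI * Im z))). set (q := exp (- (2 * PI * Im tau))).
  assert (Hq1 : q < 1). { unfold q. rewrite <- exp_0. apply exp_increasing.
    pose proof PI_RGT_0. nra. }
  assert (Hq0 : 0 < q) by apply exp_pos.
  assert (HA : 0 < A) by apply exp_pos.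
  set (B := exp (A / (1 - q))).
  assert (HB : forall n, Cmod (p n) <= B).
  { intros n. eapply Rle_trans. apply partial_bound; exact Ht.
    unfold B. apply exp_le. fold A q. apply Rmult_le_compat_r.
    left; apply Rinv_0_lt_compat; lra.
    pose proof (pow_lt q n Hq0). nra. }
  set (a := fun n => match n with O => p O | S k => Cminus (p (S k)) (p k) end).
  set (b := fun n => match n with O => 1 | S k => B * A * q ^ k end).
  assert (Hab : forall n, @norm C_AbsRing C_CompleteNormedModule (a n) <= b n).
  { intros [|k]; [change (Cmod (a 0%nat) <= b 0%nat) | change (Cmod (a (S k)) <= b (S k))]; simpl.
    - unfold p; simpl. rewrite Cmod_1. lra.
    - unfold p. simpl prodC.
      replace (Cminus (Cmult (prodC k u) (u k)) (prodC k u)) with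
        (Copp (Cmult (prodC k u) (ee (Cplus z (Cmult (RtoC (INR k)) tau))))) by (unfold u; field).
      rewrite Cmod_opp, Cmod_mult, Cmod_ee. replace (B * A * q ^ k) with (B * (A * q ^ k)) by ring.
      apply Rmult_le_compat. apply Cmod_ge_0. left; apply exp_pos. apply HB.
      right. unfold A, q. rewrite <- exp_mult_nat, <- exp_plus.
      f_equal. destruct z, tau. unfold Cplus, Cmult, RtoC, Im; simpl. ring. }
  assert (Hb : ex_series b).
  { apply ex_series_incr_1. simpl.
    assert (G : ex_series (fun k => q ^ k)) by (apply ex_series_geom; rewrite Rabs_pos_eq; lra).
    pose proof (@ex_series_scal_l R_AbsRing R_NormedModule (B * A) _ G) as G2.
    eapply ex_series_ext; [|exact G2]. intros k. reflexivity. }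
  destruct (@ex_series_le C_AbsRing C_CompleteNormedModule a b Hab Hb) as [Sl HS].
  exists Sl. unfold is_series in HS.
  assert (Hs : forall n, sum_n a n = p n).
  { induction n as [|n IH]. rewrite sum_O. reflexivity.
    rewrite sum_Sn, IH. change (Cplus (p n) (Cminus (p (S n)) (p n)) = p (S n)). ring. }
  eapply filterlim_ext. exact Hs. exact HS.
Qed.

Lemma varpi_spec z tau : 0 < Im tau ->
  filterlim (fun n => prodC n (fun k => Cminus (RtoC 1) (ee (Cplus z (Cmult (RtoC (INR k)) tau))))) eventually (locally (varpi z tau)).
Proof.
  intros Ht. unfold varpi, infprodC. apply epsilon_spec. apply prod_conv; exact Ht.
Qed.

Lemma prodC_ext n f g : (forall i, (i < n)%nat -> f i = g i) -> prodC n f = prodC n g.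
Proof.
  induction n as [|n IH]; intros H; simpl. reflexivity.
  rewrite IH, H. reflexivity. lia. intros; apply H; lia.
Qed.

Lemma prodC_mul n f g : prodC n (fun i => Cmult (f i) (g i)) = Cmult (prodC n f) (prodC n g).
Proof. induction n as [|n IH]; simpl. ring. rewrite IH. ring. Qed.

Lemma prodC_swap n m (f : nat -> nat -> C) :
  prodC n (fun i => prodC m (fun j => f i j)) = prodC m (fun j => prodC n (fun i => f i j)).
Proof.
  induction n as [|n IH]; simpl.
  - induction m as [|m IHm]; simpl. reflexivity. rewrite <- IHm. ring.
  - rewrite IH, <- prodC_mul. reflexivity.
Qed.

Lemma prodC_add p q g : prodC (p + q) g = Cmult (prodC p g) (prodC q (fun l => g (p + l)%nat)).
Proof.
  induction q as [|q IH]; simpl. rewrite Nat.add_0_r. ring.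
  rewrite Nat.add_succ_r. simpl. rewrite IH. ring.
Qed.

Lemma prodC_block M D g : prodC (M * D) g = prodC M (fun m => prodC D (fun l => g (m * D + l)%nat)).
Proof.
  induction M as [|M IH]; simpl. reflexivity.
  rewrite Nat.add_comm, prodC_add, IH. reflexivity.
Qed.

Lemma Cmult_lim (x y : C) : filterlim (fun z : C * C => Cmult (fst z) (snd z))
  (filter_prod (@locally C_UniformSpace x) (@locally C_UniformSpace y)) (@locally C_UniformSpace (Cmult x y)).
Proof.
  intros P HP. apply locally_C in HP.
  destruct (@filterlim_mult C_AbsRing x y P HP) as [Q R HQ HR H].
  exists Q R. apply locally_C; exact HQ. apply locally_C; exact HR. exact H.
Qed.

Lemma lim_prodC n (f : nat -> nat -> C) (v : nat -> C) :
  (forall i, (i < n)%nat -> filterlim (fun M => f i M) eventually (locally (v i))) ->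
  filterlim (fun M => prodC n (fun i => f i M)) eventually (locally (prodC n v)).
Proof.
  induction n as [|n IH]; intros H; simpl.
  - apply filterlim_const.
  - eapply filterlim_comp_2. apply IH. intros; apply H; lia. apply H; lia.
    apply Cmult_lim.
Qed.

Lemma lim_sub (D : nat) (f : nat -> C) L : (1 <= D)%nat ->
  filterlim f eventually (locally L) -> filterlim (fun M => f (M * D)%nat) eventually (locally L).
Proof.
  intros HD H. eapply filterlim_comp; [|exact H].
  intros P [N HN]. exists N. intros n Hn. apply HN. nia.
Qed.

From Stdlib Require Import Reals QArith ZArith ClassicalEpsilon Lra Lia.
From Coquelicot Require Import Coquelicot.
Open Scope R_scope.

Lemma ee_shift_nat u k : ee (Cplus u (RtoC (INR k))) = ee u.
Proof. rewrite ee_add, ee_nat. ring. Qed.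

Definition zeta (A : nat) : C := ee (RtoC (- / INR A)).

Lemma zeta_pow A k : Cpow (zeta A) k = ee (RtoC (- INR k / INR A)).
Proof.
  unfold zeta. rewrite ee_pow. apply ee_ext; unfold Cmult, RtoC, Re, Im; simpl; unfold Rdiv; ring.
Qed.

Lemma zeta_A A : (0 < A)%nat -> Cpow (zeta A) A = RtoC 1.
Proof.
  intros HA. rewrite zeta_pow.
  rewrite <- (ee_shift_nat _ 1). rewrite <- (ee_nat 0).
  apply ee_ext; unfold Cplus, RtoC, Re, Im; simpl. field. apply not_0_INR; lia. ring.
Qed.

Lemma zeta_k A k : (0 < k)%nat -> (k < A)%nat -> Cpow (zeta A) k <> RtoC 1.
Proof.
  intros Hk HkA H. rewrite zeta_pow in H. unfold ee, Cmult, RtoC, Re, Im in H; simpl in H.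
  injection H. clear H. replace (- (2 * PI * 0)) with 0 by ring. rewrite exp_0.
  set (x := 2 * PI * (INR k / INR A)).
  replace (2 * PI * (- INR k / INR A)) with (- x) by (unfold x, Rdiv; ring).
  rewrite cos_neg, sin_neg. intros Hs Hc.
  assert (Hk' : 0 < INR k) by (apply lt_0_INR; lia).
  assert (HkA' : INR k < INR A) by (apply lt_INR; lia).
  assert (Hx0 : 0 < x). { unfold x. pose proof PI_RGT_0. apply Rmult_lt_0_compat. lra. apply Rdiv_lt_0_compat; lra. }
  assert (Hx1 : x < 2 * PI). { unfold x. pose proof PI_RGT_0.
    assert (INR k / INR A < 1). { apply (Rmult_lt_reg_r (INR A)). lra. field_simplify; lra. }
    nra. }
  destruct (sin_eq_O_2PI_0 x) as [E|[E|E]]; try lra.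
  rewrite E, cos_PI in Hc. lra.
Qed.

Lemma key (r1 r2 : R) (A Bn D : nat) (tau : C) (m l : nat) :
  (0 < A)%nat -> (1 <= D)%nat ->
  prodC A (fun j => Cminus (RtoC 1) (ee (Cplus
     (Cminus (Cmult (RtoC (Minv2 (INR A) (INR Bn) (INR D) (INR j + r1) (INR l + r2))) tau)
             (RtoC (Minv1 (INR A) (INR Bn) (INR D) (INR j + r1) (INR l + r2))))
     (Cmult (RtoC (INR m)) tau))))
  = Cminus (RtoC 1) (ee (Cplus
      (Cminus (Cmult (RtoC r2) (Cdiv (Cplus (Cmult (RtoC (INR A)) tau) (RtoC (INR Bn))) (RtoC (INR D)))) (RtoC r1))
      (Cmult (RtoC (INR (m * D + l))) (Cdiv (Cplus (Cmult (RtoC (INR A)) tau) (RtoC (INR Bn))) (RtoC (INR D)))))).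
Proof.
  intros HA HD.
  assert (HA' : INR A <> 0) by (apply not_0_INR; lia).
  assert (HD' : INR D <> 0) by (apply not_0_INR; lia).
  set (arg0 := Cplus
     (Cminus (Cmult (RtoC (Minv2 (INR A) (INR Bn) (INR D) (INR 0 + r1) (INR l + r2))) tau)
             (RtoC (Minv1 (INR A) (INR Bn) (INR D) (INR 0 + r1) (INR l + r2))))
     (Cmult (RtoC (INR m)) tau)).
  rewrite (prodC_ext _ _ (fun j => Cminus (RtoC 1) (Cmult (ee arg0) (Cpow (zeta A) j)))).
  2:{ intros j _. f_equal. rewrite zeta_pow, <- ee_add. unfold arg0, Minv1, Minv2.
      destruct tau as [t1 t2]. apply ee_ext; unfold Cplus, Cminus, Cmult, Copp, RtoC, Re, Im; simpl; field; auto. }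
  rewrite MC.C_root_prod'; [| lia | apply zeta_A; lia | intros; apply zeta_k; lia].
  f_equal. f_equal. rewrite ee_pow. rewrite <- (ee_shift_nat _ (Bn * m)).
  unfold arg0, Minv1, Minv2. rewrite !mult_INR, plus_INR, mult_INR.
  destruct tau as [t1 t2]. apply ee_ext; unfold Cplus, Cminus, Cmult, Copp, Cdiv, Cinv, RtoC, Re, Im; simpl; field; nra.
Qed.

Lemma main_nat (r1 r2 : R) (A Bn D : nat) (tau : C) :
  (Bn < A)%nat -> (1 <= D)%nat -> 0 < Im tau ->
  varpi_s r1 r2 (Cdiv (Cplus (Cmult (RtoC (INR A)) tau) (RtoC (INR Bn))) (RtoC (INR D)))
  = prodC A (fun j => prodC D (fun l =>
      varpi_s (Minv1 (INR A) (INR Bn) (INR D) (INR j + r1) (INR l + r2))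
              (Minv2 (INR A) (INR Bn) (INR D) (INR j + r1) (INR l + r2)) tau)).
Proof.
  intros HBA HD Ht.
  assert (HA : (0 < A)%nat) by lia.
  set (tau' := Cdiv (Cplus (Cmult (RtoC (INR A)) tau) (RtoC (INR Bn))) (RtoC (INR D))).
  assert (Ht' : 0 < Im tau').
  { assert (HA' : 0 < INR A) by (apply lt_0_INR; lia).
    assert (HD' : 0 < INR D) by (apply lt_0_INR; lia).
    unfold tau'. destruct tau as [t1 t2]. unfold Im in Ht |- *; simpl in Ht |- *.
    unfold Cdiv, Cinv, Cmult, Cplus, RtoC; simpl.
    match goal with |- 0 < ?e => replace e with (INR A * t2 / INR D) by (field; lra) end.
    apply Rdiv_lt_0_compat; nra. }
  unfold varpi_s at 1.
  pose proof (varpi_spec (Cminus (Cmult (RtoC r2) tau') (RtoC r1)) _ Ht') as HL.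
  apply (lim_sub D _ _ HD) in HL.
  refine (@filterlim_locally_unique nat C_AbsRing C_NormedModule eventually _ _ _ _ HL _).
  eapply filterlim_ext.
  2:{ apply lim_prodC. intros j _. apply lim_prodC. intros l _.
      unfold varpi_s. apply varpi_spec. exact Ht. }
  intros M. simpl.
  erewrite prodC_ext; [| intros j _; apply prodC_swap].
  rewrite prodC_swap.
  rewrite prodC_block. apply prodC_ext. intros m _.
  rewrite prodC_swap. apply prodC_ext. intros l _.
  apply key; lia.
Qed.

Theorem proposition4p45 (r1 r2 : Q) (a b d : Z) (tau : C) :
  (0 <= b)%Z -> (b < a)%Z -> (1 <= d)%Z -> in_H tau ->
  varpi_s (Q2R r1) (Q2R r2)
    (Cdiv (Cplus (Cmult (RtoC (IZR a)) tau) (RtoC (IZR b))) (RtoC (IZR d)))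
  = prodC (Z.to_nat a) (fun j => prodC (Z.to_nat d) (fun l =>
      varpi_s
        (Minv1 (IZR a) (IZR b) (IZR d) (INR j + Q2R r1) (INR l + Q2R r2))
        (Minv2 (IZR a) (IZR b) (IZR d) (INR j + Q2R r1) (INR l + Q2R r2))
        tau)).
Proof.
  intros Hb Hba Hd Ht.
  assert (Ha : (0 <= a)%Z) by lia.
  assert (Hd0 : (0 <= d)%Z) by lia.
  rewrite <- (Z2Nat.id a Ha).
  rewrite <- (Z2Nat.id b Hb).
  rewrite <- (Z2Nat.id d Hd0).
  rewrite !Nat2Z.id.
  rewrite <- !INR_IZR_INZ.
  apply main_nat; [lia | lia | exact Ht].
Qed.
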